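(* Let $c,d\in\mathbb{R}^n$ be distinct nonzero vectors with $c^Td\le0$. Then $\gamma[c,d]\le\tfrac12$. If in addition $0\notin[c,d]$, then $\gamma[c,d]>0$.
   Context: For distinct vectors $c,d\in\mathbb{R}^n$, $\gamma[c,d]=\frac{\sqrt{\|c\|^2\|d\|^2-(c^Td)^2}}{\|c-d\|^2}$, and $[c,d]$ denotes the closed line segment between $c$ and $d$. *)

(* Defs.v *)
From HB Require Import structures.
From mathcomp Require Import all_boot all_order all_algebra.
From mathcomp Require Import reals.
Set Implicit Arguments. Unset Strict Implicit. Unset Printing Implicit Defensive.
Import Order.TTheory GRing.Theory Num.Theory.
Local Open Scope ring_scope.

Definition dotv (R : realType) (n : nat) (c d : 'cV[R]_n) : R :=
  \sum_(i < n) c i 0 * d i 0.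

Definition nrm2 (R : realType) (n : nat) (c : 'cV[R]_n) : R := dotv c c.

Definition gammacd (R : realType) (n : nat) (c d : 'cV[R]_n) : R :=
  Num.sqrt (nrm2 c * nrm2 d - (dotv c d) ^+ 2) / nrm2 (c - d).

Definition in_segment (R : realType) (n : nat) (x c d : 'cV[R]_n) : Prop :=
  exists t : R, 0 <= t /\ t <= 1 /\ x = (1 - t) *: c + t *: d.

(* Main.v *)
Require Import Defs.
From HB Require Import structures.
From mathcomp Require Import all_boot all_order all_algebra.
From mathcomp Require Import reals ring lra.
Import Order.TTheory GRing.Theory Num.Theory.
Local Open Scope ring_scope.
Section S.
Context {R : realType} {n : nat}.
Implicit Types x y z : 'cV[R]_n.
Lemma dotvC x y : dotv x y = dotv y x.
Proof. by apply: eq_bigr => i _; rewrite mulrC. Qed.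
Lemma dotvDl x y z : dotv (x + y) z = dotv x z + dotv y z.
Proof. by rewrite /dotv -big_split; apply: eq_bigr => i _; rewrite !mxE mulrDl. Qed.
Lemma dotvZl (k : R) x z : dotv (k *: x) z = k * dotv x z.
Proof. by rewrite /dotv mulr_sumr; apply: eq_bigr => i _; rewrite !mxE mulrA. Qed.
Lemma dotvNl x z : dotv (- x) z = - dotv x z.
Proof. by rewrite -scaleN1r dotvZl mulN1r. Qed.
Lemma nrm2_ge0 x : 0 <= nrm2 x.
Proof. by apply: sumr_ge0 => i _; rewrite -expr2 sqr_ge0. Qed.
Lemma nrm2_eq0 x : nrm2 x = 0 -> x = 0.
Proof.
move=> h; apply/matrixP => i j; rewrite (ord1 j) mxE.
have: \sum_(k < n) x k 0 * x k 0 == 0 by apply/eqP.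
rewrite psumr_eq0; last by move=> k _; rewrite -expr2 sqr_ge0.
move/allP => /(_ i (mem_index_enum _)) /=; rewrite mulf_eq0 orbb => /eqP //.
Qed.
End S.

Theorem mainTheorem8 (R : realType) (n : nat) (c d : 'cV[R]_n)
  (hcd : c != d) (hc : c != 0) (hd : d != 0) (hdot : dotv c d <= 0) :
  gammacd c d <= 1 / 2 /\ (~ in_segment 0 c d -> 0 < gammacd c d).
Proof.
set a := nrm2 c; set b := nrm2 d; set p := dotv c d.
have ha : 0 < a.
  rewrite lt0r nrm2_ge0 andbT; apply/eqP => /nrm2_eq0 h; by rewrite h eqxx in hc.
have hb : 0 <= b by apply: nrm2_ge0.
have hden : nrm2 (c - d) = a + b - 2 * p.
  rewrite /nrm2 !(dotvDl, dotvNl) ![dotv _ (c - d)]dotvC !(dotvDl, dotvNl).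
  rewrite /a /b /p /nrm2 (dotvC d c); ring.
pose v := a *: d - p *: c.
have hv : nrm2 v = a * (a * b - p ^+ 2).
  rewrite /nrm2 /v !(dotvDl, dotvNl, dotvZl) ![dotv _ (_ - _)]dotvC !(dotvDl, dotvNl, dotvZl).
  rewrite -/(nrm2 c) -/(nrm2 d) -/a -/b (dotvC d c) -/p; ring.
have hx : 0 <= a * b - p ^+ 2.
  by have := nrm2_ge0 v; rewrite hv pmulr_rge0.
have hp : p <= 0 by [].
have hD : 0 < a + b - 2 * p by lra.
rewrite /gammacd hden -/a -/b -/p; split.
  rewrite ler_pdivrMr // -ler_sqr ?nnegrE ?sqrtr_ge0 //; last lra.
  rewrite sqr_sqrtr //. have h1 := sqr_ge0 (a - b). have h2 : 0 <= - p * (a + b) by nra. have h3 := sqr_ge0 p. rewrite expr2; nra.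
move=> hseg; apply: divr_gt0 => //; rewrite sqrtr_gt0 lt0r hx andbT.
apply/eqP => h0; apply: hseg.
have v0 : v = 0 by apply: nrm2_eq0; rewrite hv h0 mulr0.
exists (a / (a - p)); split; first by apply: divr_ge0; lra.
split; first by rewrite ler_pdivrMr ?mul1r; lra.
have hap : a - p != 0 by rewrite gt_eqF //; lra.
apply: (@scalerI _ _ (a - p)) => //.
rewrite scaler0 scalerDr !scalerA mulrBr mulr1 mulrCA divff // mulr1.
rewrite -v0 /v; have ->: a - p - a = - p by ring.
by rewrite scaleNr addrC.
Qed.
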